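(* Assume the monotone likelihood ratio property: for all $\rho,\rho'\in\mathcal{R}$ with $\rho>\rho'$, $\frac{\Pr\{R=\rho\mid Y=1\}}{\Pr\{R=\rho\mid Y=0\}}\ge\frac{\Pr\{R=\rho'\mid Y=1\}}{\Pr\{R=\rho'\mid Y=0\}}$. Then for every $1\le m\le n$, the accuracy $$\theta(\epsilon)=\frac{1}{m}\sum_{i\in\mathcal{N}}\Pr\{J_{i,\epsilon}=1,\ Y_i=1\}$$ of the exponential mechanism $\mathscr{B}_\epsilon$ is increasing in $\epsilon\ge0$.
   Context: There are $n$ individuals indexed by $\mathcal{N}=\{1,\dots,n\}$. Individual $i$ is described by a random tuple $(X_i,A_i,Y_i)$, with features $X_i\in\mathcal{X}$, protected attribute $A_i\in\{0,1\}$ and qualification state $Y_i\in\{0,1\}$; the tuples are i.i.d. with a common distribution $\mathsf{F}$, and $(X,A,Y)$ is a generic tuple with this distribution. A fixed function $r:\mathcal{X}\to\mathcal{R}$ is given, with $\mathcal{R}\subset[0,1]$ finite; $R_i=r(X_i)$, $R=r(X)$. Let $\mathcal{S}$ be the family of all $m$-element subsets of $\mathcal{N}$. For $\epsilon\ge0$, the exponential mechanism $\mathscr{B}_\epsilon$, given realized scores $(r_1,\dots,r_n)$, selects $\mathcal{G}\in\mathcal{S}$ with probability $\exp(\epsilon\sum_{j\in\mathcal{G}}r_j/2)/\sum_{\mathcal{G}'\in\mathcal{S}}\exp(\epsilon\sum_{j\in\mathcal{G}'}r_j/2)$. $J_{i,\epsilon}$ is the indicator that individual $i$ belongs to the set selected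 by $\mathscr{B}_\epsilon$. *)

(* Defs.v *)
From HB Require Import structures.
From mathcomp Require Import all_boot all_order all_algebra.
From mathcomp Require Import all_classical all_reals all_analysis.
Set Implicit Arguments. Unset Strict Implicit. Unset Printing Implicit Defensive.
Import Order.TTheory GRing.Theory Num.Theory.
Local Open Scope ring_scope.
Local Open Scope classical_set_scope.

Section Defs.
Context {R : realType} {d : measure_display} {X : measurableType d}.

(* A tuple (X, A, Y) is the element ((x, a), y) of X * bool * bool. *)

Definition probRY (F : probability (X * bool * bool)%type R) (r : X -> R)
  (rho : R) (y : bool) : R :=
  fine (F [set t | r t.1.1 = rho /\ t.2 = y]).

Definition probY (F : probability (X * bool * bool)%type R) (y : bool) : R :=
  fine (F [set t | t.2 = y]).

Definition condprobR (F : probability (X * bool * bool)%type R) (r : X -> R)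
  (rho : R) (y : bool) : R := probRY F r rho y / probY F y.

(* Monotone likelihood ratio property, cross-multiplied form of
   Pr{R=rho|Y=1}/Pr{R=rho|Y=0} >= Pr{R=rho'|Y=1}/Pr{R=rho'|Y=0}. *)
Definition MLR (F : probability (X * bool * bool)%type R) (r : X -> R)
  (Rs : seq R) : Prop :=
  forall rho rho', rho \in Rs -> rho' \in Rs -> rho' < rho ->
    condprobR F r rho' true * condprobR F r rho false
    <= condprobR F r rho true * condprobR F r rho' false.

End Defs.

Definition expmech_weight {R : realType} (n m : nat) (eps : R)
  (rs : 'I_n -> R) (G : {set 'I_n}) : R :=
  expR (eps * (\sum_(j in G) rs j) / 2) /
  \sum_(G' : {set 'I_n} | #|G'| == m) expR (eps * (\sum_(j in G') rs j) / 2).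

(* Probability (over the mechanism's randomness) that individual i is selected,
   i.e. Pr{J_{i,eps} = 1 | scores rs}. *)
Definition select_prob {R : realType} (n m : nat) (eps : R)
  (rs : 'I_n -> R) (i : 'I_n) : R :=
  \sum_(G : {set 'I_n} | (#|G| == m) && (i \in G)) expmech_weight m eps rs G.

(* Accuracy theta(eps) = (1/m) sum_i Pr{J_{i,eps} = 1, Y_i = 1}, where the
   (R_i, Y_i) are i.i.d. with the law of (r(X), Y) under F: the joint
   probability is the sum over all realizations z of ((R_j, Y_j))_j of
   prod_j Pr{R=R_j, Y=Y_j} * Pr{J_i = 1 | scores} * [Y_i = 1]. *)
Definition accuracy {R : realType} {d : measure_display} {X : measurableType d}
  (F : probability (X * bool * bool)%type R) (r : X -> R) (Rs : seq R)
  (n m : nat) (eps : R) : R :=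
  m%:R^-1 * \sum_(i : 'I_n)
    \sum_(z : {ffun 'I_n -> (seq_sub Rs * bool)%type})
      (\prod_(j : 'I_n) probRY F r (val (z j).1) (z j).2) *
      select_prob m eps (fun j => val (z j).1) i * ((z i).2)%:R.

(* Main.v *)
Require Import Defs.
From HB Require Import structures.
From mathcomp Require Import all_boot all_order all_algebra.
From mathcomp Require Import all_classical all_reals all_analysis.
From mathcomp Require Import ring lra zify.
Set Implicit Arguments. Unset Strict Implicit. Unset Printing Implicit Defensive.
Import Order.TTheory GRing.Theory Num.Theory.
Local Open Scope ring_scope.

Section Core.
Variable R : realFieldType.
Variable n : nat.
Local Notation I := 'I_n.

Lemma split_sum_sets (D : {set I}) (s : nat) (Phi Psi : {set I} -> R) :
  \sum_(G : {set I} | #|G| == s) Phi (G :&: D) * Psi (G :\: D) =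
  \sum_(k < s.+1) (\sum_(H : {set I} | (H \subset D) && (#|H| == k)) Phi H) *
                  (\sum_(K : {set I} | (K \subset ~: D) && (#|K| == s - k)%N) Psi K).
Proof.
pose f (H K : {set I}) := if [&& H \subset D, K \subset ~: D & #|H| + #|K| == s]%N
  then Phi H * Psi K else 0.
transitivity (\sum_(H : {set I}) \sum_(K : {set I}) f H K).
  transitivity (\sum_(G : {set I}) \sum_(H : {set I}) \sum_(K : {set I})
     (if [&& #|G| == s, H == G :&: D & K == G :\: D] then Phi H * Psi K else 0)).
    rewrite big_mkcond; apply: eq_bigr => G _.
    case: eqP => _ /=; last by rewrite !big1.
    rewrite [RHS](eq_bigr (fun H => if H == G :&: D then Phi H * Psi (G :\: D) else 0)); last first.
      move=> H _; case: eqP => _ /=; last by rewrite big1.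
      by rewrite (bigD1 (G :\: D)) //= eqxx big1 ?addr0 // => K /negPf ->.
    by rewrite -big_mkcond big_pred1_eq.
  rewrite exchange_big; apply: eq_bigr => H _.
  rewrite exchange_big; apply: eq_bigr => K _.
  rewrite /f; case hH: (H \subset D); case hK: (K \subset ~: D) => /=.
  - have [e1 e2 e3] : [/\ (H :|: K) :&: D = H, (H :|: K) :\: D = K & #|H :|: K| = (#|H| + #|K|)%N].
      have hx : forall x, x \in H -> x \in D by apply/fintype.subsetP.
      have hy : forall x, x \in K -> x \notin D.
        by move=> x xK; move/fintype.subsetP: hK => /(_ x xK); rewrite inE.
      have hx' : forall x, (x \in H) ==> (x \in D) by move=> x; apply/implyP; apply: hx.
      have hy' : forall x, (x \in K) ==> (x \notin D) by move=> x; apply/implyP; apply: hy.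
      split.
      + apply/setP => x; rewrite !inE; move: (hx' x) (hy' x).
        by case: (x \in H); case: (x \in K); case: (x \in D).
      + apply/setP => x; rewrite !inE; move: (hx' x) (hy' x).
        by case: (x \in H); case: (x \in K); case: (x \in D).
      + rewrite cardsU; suff -> : H :&: K = finset.set0 by rewrite cards0 subn0.
        apply/setP => x; rewrite !inE; move: (hx' x) (hy' x).
        by case: (x \in H); case: (x \in K); case: (x \in D).
    rewrite (bigD1 (H :|: K)) //= big1 ?addr0; last first.
      move=> G hG; case: eqP => //= _; case: eqP => [hGH|//]; case: eqP => [hGK|//].
      by move: hG; rewrite hGH hGK setID eqxx.
    by rewrite e1 e2 e3 !eqxx; case: (_ == s).
  - apply: big1 => G _; case: ifP => // /and3P [_ /eqP eH /eqP eK].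
    by move: hK; rewrite eK finset.setDE subsetIr.
  - apply: big1 => G _; case: ifP => // /and3P [_ /eqP eH /eqP eK].
    by move: hH; rewrite eH subsetIr.
  - apply: big1 => G _; case: ifP => // /and3P [_ /eqP eH /eqP eK].
    by move: hH; rewrite eH subsetIr.
rewrite (eq_bigr (fun H : {set I} => \sum_(k < s.+1) if (H \subset D) && (#|H| == k)
   then Phi H * \sum_(K : {set I} | (K \subset ~: D) && (#|K| == s - k)%N) Psi K else 0)); last first.
  move=> H _; case hH: (H \subset D) => /=; last by rewrite !big1 // => K _; rewrite /f hH.
  case: (leqP #|H| s) => hs.
  - rewrite [RHS](bigD1 (Ordinal (hs : (#|H| < s.+1)%N))) //= eqxx [X in _ + X]big1 ?addr0; last first.
      move=> k hk; rewrite (_ : (#|H| == k) = false) //.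
      by apply/negbTE/eqP => e; case/eqP: hk; apply: val_inj; rewrite /= -e.
    rewrite big_distrr /= [RHS]big_mkcond; apply: eq_bigr => K _.
    rewrite /f hH /=; case: (K \subset ~: D) => //=.
    have -> : ((#|H| + #|K|)%N == s) = (#|K| == s - #|H|)%N by apply/eqP/eqP; lia.
    by case: ifP; rewrite ?mulr0.
  - rewrite !big1 // => [k _|K _].
      rewrite (_ : (#|H| == k) = false) //.
      by apply/negbTE/eqP => e; move: (ltn_ord k); rewrite -e; lia.
    rewrite /f hH /= (_ : (#|H| + #|K| == s)%N = false) ?andbF //; apply/negbTE/eqP; lia.
rewrite exchange_big; apply: eq_bigr => k _.
rewrite big_distrl [RHS]big_mkcond /=; apply: eq_bigr => H _.
by case: ifP; rewrite ?mul0r.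
Qed.
End Core.

Section Core2.
Variable R : realFieldType.
Variable n : nat.
Local Notation I := 'I_n.

Definition wtp (l : I -> R) (G : {set I}) := \prod_(i in G) l i.
Definition esym_w (l : I -> R) (k : nat) := \sum_(G : {set I} | #|G| == k) wtp l G.
Definition restr_w (D : {set I}) (l : I -> R) := fun i => if i \in D then l i else 0.
Definition Tcnt (l : I -> R) (C : {set I}) (k : nat) :=
  \sum_(G : {set I} | #|G| == k) wtp l G * #|G :&: C|%:R.
Definition tp2 (f : nat -> R) := forall a b d, (a <= b)%N -> f a * f (b + d)%N <= f (a + d)%N * f b.

Lemma wt_split (D : {set I}) l G : wtp l G = wtp l (G :&: D) * wtp l (G :\: D).
Proof. by rewrite /wtp (big_setID D). Qed.

Lemma wt_restr (D : {set I}) l H : wtp (restr_w D l) H = if H \subset D then wtp l H else 0.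
Proof.
case: ifP => hs.
  by apply: eq_bigr => i iH; rewrite /restr_w (fintype.subsetP hs i iH).
case/fintype.subsetPn: (negbT hs) => i iH iD.
by rewrite /wtp (bigD1 i) //= /restr_w (negPf iD) mul0r.
Qed.

Lemma sum_restr (D : {set I}) l k (g : {set I} -> R) :
  \sum_(H : {set I} | (H \subset D) && (#|H| == k)) wtp l H * g H =
  \sum_(H : {set I} | #|H| == k) wtp (restr_w D l) H * g H.
Proof.
rewrite big_mkcond [RHS]big_mkcond; apply: eq_bigr => H _.
rewrite wt_restr; case: (H \subset D) => //=.
by case: ifP; rewrite ?mul0r.
Qed.

Lemma wt_ge0 l G : (forall i, 0 <= l i) -> 0 <= wtp l G.
Proof. by move=> h; apply: prodr_ge0 => i _. Qed.

Lemma esym_ge0 l k : (forall i, 0 <= l i) -> 0 <= esym_w l k.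
Proof. by move=> h; apply: sumr_ge0 => G _; apply: wt_ge0. Qed.

Lemma tp2_step (f : nat -> R) c : (forall k, 0 <= f k) -> tp2 f -> 0 <= c ->
  tp2 (fun k => c * (if k == 0%N then 0 else f k.-1) + f k).
Proof.
move=> f0 tf c0 a b d hab.
case: d => [|d]; first by rewrite !addn0 mulrC.
have cc : 0 <= c * c by apply: mulr_ge0.
case: a hab => [|a] hab.
- rewrite /= !add0n addnS /=.
  have h1 := tf 0%N b d.+1 (leq0n _); rewrite !add0n in h1.
  have h2 := ler_wpM2l c0 (tf 0%N b d (leq0n _)); rewrite !add0n in h2.
  have hX : 0 <= (if b == 0%N then 0 else f b.-1) by case: ifP.
  have h6 := mulr_ge0 cc (mulr_ge0 (f0 d) hX).
  have h7 := mulr_ge0 c0 (mulr_ge0 (f0 d.+1) hX).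
  have h8 := mulr_ge0 c0 (mulr_ge0 (f0 d) (f0 b)).
  move: h1 h2 h6 h7 h8 hX.
  set X := (if b == 0%N then 0 else f b.-1).
  rewrite addnS /=.
  move=> *; nra.
- case: b hab => [|b] hab //.
  have hab' : (a <= b)%N by [].
  rewrite /= !addSn /= !addnS /=.
  have h1 := ler_wpM2l cc (tf a b d.+1 hab').
  have h2 := ler_wpM2l c0 (tf a.+1 b.+1 d hab).
  have h3 := ler_wpM2l c0 (tf a b d.+2 hab').
  have h4 := tf a.+1 b.+1 d.+1 hab.
  rewrite !addSn !addnS in h1 h2 h3 h4.
  nra.
Qed.

Lemma tp2_ext (f g : nat -> R) : (forall k, f k = g k) -> tp2 f -> tp2 g.
Proof. by move=> e t a b d h; rewrite -!e; apply: t. Qed.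

Lemma prod_poly l : \prod_(i : I) ((l i)%:P * 'X + 1) = \sum_(J : {set I}) (wtp l J)%:P * 'X^#|J|.
Proof.
rewrite bigA_distr; apply: eq_bigr => J _.
by rewrite -big_mkcond /= big_split /= prodr_const /wtp rmorph_prod.
Qed.

Lemma esym_coef l k : esym_w l k = (\prod_(i : I) ((l i)%:P * 'X + 1))`_k.
Proof.
rewrite prod_poly coef_sum /esym_w big_mkcond; apply: eq_bigr => J _.
by rewrite coefCM coefXn eq_sym; case: ifP; rewrite ?mulr0 ?mulr1.
Qed.

Lemma tp2_1 : tp2 (fun k => (1 : {poly R})`_k).
Proof.
move=> a b d hab; rewrite !coef1.
case: a hab => [|a]; case: b => [|b]; case: d => [|d] //= _;
  rewrite ?mul0r ?mulr0 ?mul1r ?mulr1 //.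
Qed.

Lemma esym_tp2 l : (forall i, 0 <= l i) -> tp2 (esym_w l).
Proof.
move=> l0; apply: (@tp2_ext (fun k => (\prod_(i : I) ((l i)%:P * 'X + 1))`_k)).
  by move=> k; rewrite esym_coef.
pose K (p : {poly R}) := (forall k, 0 <= p`_k) /\ tp2 (fun k => p`_k).
suff : K (\prod_(i : I) ((l i)%:P * 'X + 1)) by case.
elim/big_rec: _ => [|i p _ [p0 tp]].
  by split; [move=> k; rewrite coef1; case: (k == 0%N)|exact: tp2_1].
have e : forall k, (((l i)%:P * 'X + 1) * p)`_k =
   l i * (if k == 0%N then 0 else p`_k.-1) + p`_k.
  by move=> k; rewrite mulrDl mul1r -mulrA coefD coefCM coefXM.
split.
  move=> k; rewrite e; apply: addr_ge0 => //; apply: mulr_ge0 => //; by case: ifP.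
apply: (tp2_ext (f := fun k => l i * (if k == 0%N then 0 else p`_k.-1) + p`_k)).
  by move=> k; rewrite e.
exact: tp2_step.
Qed.

End Core2.

Section Core3.
Variable R : realFieldType.

Lemma cheb_sum K (phi N Z : nat -> R) :
  (forall a b, (a <= b)%N -> phi a <= phi b) ->
  (forall a b, (a <= b)%N -> N b * Z a <= N a * Z b) ->
  (\sum_(k < K) phi k * N k) * (\sum_(k < K) Z k) <=
  (\sum_(k < K) N k) * (\sum_(k < K) phi k * Z k).
Proof.
move=> hphi hN.
pose X (a b : 'I_K) := (phi b - phi a) * (N a * Z b).
have key : forall a b, 0 <= X a b + X b a.
  move=> a b; rewrite /X; case: (leqP a b) => h.
    have := hphi a b h; have := hN a b h; nra.
  have := hphi b a (ltnW h); have := hN b a (ltnW h); nra.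
have eL : (\sum_(k < K) phi k * N k) * (\sum_(k < K) Z k) =
    \sum_(a < K) \sum_(b < K) phi a * N a * Z b.
  by rewrite big_distrl; apply: eq_bigr => a _; rewrite big_distrr.
have eR : (\sum_(k < K) N k) * (\sum_(k < K) phi k * Z k) =
    \sum_(a < K) \sum_(b < K) N a * (phi b * Z b).
  by rewrite big_distrl; apply: eq_bigr => a _; rewrite big_distrr.
rewrite eL eR -subr_ge0 -sumrB.
have e2 : \sum_(a < K) (\sum_(b < K) N a * (phi b * Z b) - \sum_(b < K) phi a * N a * Z b)
    = \sum_(a < K) \sum_(b < K) X a b.
  apply: eq_bigr => a _; rewrite -sumrB; apply: eq_bigr => b _; rewrite /X; ring.
rewrite e2.
have : 0 <= \sum_(a < K) \sum_(b < K) (X a b + X b a).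
  by apply: sumr_ge0 => a _; apply: sumr_ge0 => b _; apply: key.
have -> : \sum_(a < K) \sum_(b < K) (X a b + X b a) =
   \sum_(a < K) \sum_(b < K) X a b + \sum_(a < K) \sum_(b < K) X a b.
  rewrite (eq_bigr (fun a => \sum_(b < K) X a b + \sum_(b < K) X b a)); last first.
    by move=> a _; rewrite big_split.
  by rewrite big_split /= [X in _ + X = _]exchange_big.
lra.
Qed.

End Core3.

Section Core3b.
Variable R : realFieldType.
Variable n : nat.
Local Notation I := 'I_n.

Lemma esym_restr_sub (D : {set I}) (l : I -> R) k :
  \sum_(H : {set I} | (H \subset D) && (#|H| == k)) wtp l H = esym_w (restr_w D l) k.
Proof.
transitivity (\sum_(H : {set I} | (H \subset D) && (#|H| == k)) wtp l H * 1).
  by apply: eq_bigr => H _; rewrite mulr1.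
rewrite sum_restr; apply: eq_bigr => H _; by rewrite mulr1.
Qed.

Lemma esym_split (C : {set I}) (mu : I -> R) j :
  esym_w mu j = \sum_(g < j.+1) esym_w (restr_w C mu) g * esym_w (restr_w (~: C) mu) (j - g).
Proof.
rewrite /esym_w (eq_bigr (fun G => wtp mu (G :&: C) * wtp mu (G :\: C))); last first.
  by move=> G _; rewrite (wt_split C).
rewrite split_sum_sets; apply: eq_bigr => g _.
by rewrite !esym_restr_sub.
Qed.

Lemma Tc_split (C : {set I}) (mu : I -> R) j :
  Tcnt mu C j = \sum_(g < j.+1) g%:R * esym_w (restr_w C mu) g * esym_w (restr_w (~: C) mu) (j - g).
Proof.
rewrite /Tcnt (eq_bigr (fun G => (wtp mu (G :&: C) * #|G :&: C|%:R) * wtp mu (G :\: C))); last first.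
  by move=> G _; rewrite (wt_split C); ring.
rewrite (split_sum_sets C j (fun H => wtp mu H * #|H|%:R) (wtp mu)); apply: eq_bigr => g _.
rewrite esym_restr_sub.
rewrite (eq_bigr (fun H => wtp mu H * g%:R)); last by move=> H /andP [_ /eqP ->].
rewrite -big_distrl /= esym_restr_sub; ring.
Qed.

Lemma efron_lemma (mu : I -> R) (C : {set I}) t s :
  (forall i, 0 <= mu i) -> (t <= s)%N ->
  Tcnt mu C t * esym_w mu s <= Tcnt mu C s * esym_w mu t.
Proof.
move=> mu0 hts.
set a := esym_w (restr_w C mu); set b := esym_w (restr_w (~: C) mu).
have a0 : forall k, 0 <= a k by move=> k; apply: esym_ge0 => i; rewrite /restr_w; case: ifP.
have b0 : forall k, 0 <= b k by move=> k; apply: esym_ge0 => i; rewrite /restr_w; case: ifP.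
have tb : tp2 b by apply: esym_tp2 => i; rewrite /restr_w; case: ifP.
pose N (g : nat) := if (g <= t)%N then a g * b (t - g)%N else 0.
pose Z (g : nat) := a g * b (s - g)%N.
have eTt : Tcnt mu C t = \sum_(g < s.+1) g%:R * N g.
  rewrite Tc_split (big_ord_widen s.+1 (fun g => g%:R * a g * b (t - g)%N)) // big_mkcond.
  by apply: eq_bigr => g _; rewrite /N ltnS; case: ifP; rewrite ?mulr0 ?mulrA.
have eEt : esym_w mu t = \sum_(g < s.+1) N g.
  rewrite (esym_split C) (big_ord_widen s.+1 (fun g => a g * b (t - g)%N)) // big_mkcond.
  by apply: eq_bigr => g _; rewrite /N ltnS; case: ifP.
have eTs : Tcnt mu C s = \sum_(g < s.+1) g%:R * Z g.
  by rewrite Tc_split; apply: eq_bigr => g _; rewrite /Z mulrA.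
have eEs : esym_w mu s = \sum_(g < s.+1) Z g by rewrite (esym_split C).
rewrite eTt eEt eTs eEs [X in _ <= X]mulrC.
apply: (@cheb_sum _ s.+1 (fun g : nat => g%:R) N Z); first by move=> x y hxy; rewrite ler_nat.
move=> x y hxy; rewrite /N /Z /=.
case: (leqP y t) => hyt; last first.
  rewrite mul0r; case: ifP => _; rewrite ?mul0r //.
  by apply: mulr_ge0; apply: mulr_ge0; [exact: a0|exact: b0|exact: a0|exact: b0].
have hxt : (x <= t)%N by apply: leq_trans hxy hyt.
rewrite hxt.
have := tb (t - y)%N (t - y + (s - t))%N (y - x)%N (leq_addr _ _).
have -> : (t - y + (s - t) + (y - x) = s - x)%N by lia.
have -> : (t - y + (y - x) = t - x)%N by lia.
have -> : (t - y + (s - t) = s - y)%N by lia.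
move=> h.
have := ler_wpM2l (mulr_ge0 (a0 x) (a0 y)) h.
move: (a0 x) (a0 y) (b0 (t - y)%N) (b0 (s - x)%N) (b0 (t - x)%N) (b0 (s - y)%N) => *.
nra.
Qed.

End Core3b.

Section Core4.
Variable R : realFieldType.
Variable n : nat.
Local Notation I := 'I_n.

Definition tiltw (A : {set I}) (c : R) (l : I -> R) :=
  fun i => if i \in A then c * l i else l i.

Lemma wt_ext (l1 l2 : I -> R) G : (forall i, l1 i = l2 i) -> wtp l1 G = wtp l2 G.
Proof. by move=> e; apply: eq_bigr => i _; rewrite e. Qed.

Lemma esym_ext (l1 l2 : I -> R) k : (forall i, l1 i = l2 i) -> esym_w l1 k = esym_w l2 k.
Proof. by move=> e; apply: eq_bigr => G _; rewrite (wt_ext _ e). Qed.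

Lemma Tc_ext (l1 l2 : I -> R) C k : (forall i, l1 i = l2 i) -> Tcnt l1 C k = Tcnt l2 C k.
Proof. by move=> e; apply: eq_bigr => G _; rewrite (wt_ext _ e). Qed.

Lemma wt_tilt_in (A : {set I}) (c : R) (l : I -> R) (H : {set I}) : H \subset A -> wtp (tiltw A c l) H = c ^+ #|H| * wtp l H.
Proof.
move=> hA; rewrite /wtp -prodr_const -big_split /=.
by apply: eq_bigr => i iH; rewrite /tiltw (fintype.subsetP hA i iH).
Qed.

Lemma wt_tilt_out (A : {set I}) (c : R) (l : I -> R) (H : {set I}) : H \subset ~: A -> wtp (tiltw A c l) H = wtp l H.
Proof.
move=> hA; apply: eq_bigr => i iH; rewrite /tiltw.
by move/fintype.subsetP: hA => /(_ i iH); rewrite inE => /negPf ->.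
Qed.

Lemma esym_tilt_split (A : {set I}) (c : R) (l : I -> R) m :
  esym_w (tiltw A c l) m =
  \sum_(k < m.+1) c ^+ k * esym_w (restr_w A l) k * esym_w (restr_w (~: A) l) (m - k).
Proof.
rewrite (esym_split A); apply: eq_bigr => k _.
rewrite -!esym_restr_sub; congr (_ * _).
  rewrite big_distrr /=; apply: eq_bigr => H /andP [hH /eqP hk].
  by rewrite wt_tilt_in // hk.
by apply: eq_bigr => K /andP [hK _]; rewrite wt_tilt_out.
Qed.

Lemma Tc_tilt_split (A C : {set I}) (c : R) (l : I -> R) m : C \subset ~: A ->
  Tcnt (tiltw A c l) C m =
  \sum_(k < m.+1) c ^+ k * esym_w (restr_w A l) k * Tcnt (restr_w (~: A) l) C (m - k).
Proof.
move=> hC.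
rewrite /Tcnt (eq_bigr (fun G => wtp (tiltw A c l) (G :&: A) *
          (wtp (tiltw A c l) (G :\: A) * #|(G :\: A) :&: C|%:R))); last first.
  move=> G _; rewrite (wt_split A) mulrA; congr (_ * _%:R); apply: eq_card => x.
  rewrite !inE; case xC: (x \in C); rewrite ?andbF //=.
  by move/fintype.subsetP: hC => /(_ x xC); rewrite inE => /negPf ->.
rewrite (split_sum_sets A m (wtp (tiltw A c l)) (fun K => wtp (tiltw A c l) K * #|K :&: C|%:R)).
apply: eq_bigr => k _.
rewrite -!esym_restr_sub; congr (_ * _).
  rewrite big_distrr /=; apply: eq_bigr => H /andP [hH /eqP hk].
  by rewrite wt_tilt_in // hk.
rewrite (eq_bigr (fun K => wtp l K * #|K :&: C|%:R)); last first.
  by move=> K /andP [hK _]; rewrite wt_tilt_out.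
by rewrite sum_restr.
Qed.

Lemma NC_tilt (l : I -> R) (A C : {set I}) (c : R) m :
  (forall i, 0 <= l i) -> C \subset ~: A -> 1 <= c ->
  Tcnt (tiltw A c l) C m * esym_w l m <= Tcnt l C m * esym_w (tiltw A c l) m.
Proof.
move=> l0 hC c1.
have e1 : Tcnt l C m = Tcnt (tiltw A 1 l) C m.
  by apply: Tc_ext => i; rewrite /tiltw; case: ifP; rewrite ?mul1r.
have e2 : esym_w l m = esym_w (tiltw A 1 l) m.
  by apply: esym_ext => i; rewrite /tiltw; case: ifP; rewrite ?mul1r.
rewrite e1 e2 !Tc_tilt_split // !esym_tilt_split.
set al := esym_w (restr_w A l); set be := Tcnt (restr_w (~: A) l) C; set ga := esym_w (restr_w (~: A) l).
have r0 : forall i, 0 <= restr_w (~: A) l i by move=> i; rewrite /restr_w; case: ifP.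
have al0 : forall k, 0 <= al k by move=> k; apply: esym_ge0 => i; rewrite /restr_w; case: ifP.
pose N (k : nat) := al k * be (m - k)%N.
pose Z (k : nat) := al k * ga (m - k)%N.
have -> : \sum_(k < m.+1) c ^+ k * al k * be (m - k)%N = \sum_(k < m.+1) c ^+ k * N k.
  by apply: eq_bigr => k _; rewrite mulrA.
have -> : \sum_(k < m.+1) c ^+ k * al k * ga (m - k)%N = \sum_(k < m.+1) c ^+ k * Z k.
  by apply: eq_bigr => k _; rewrite mulrA.
have -> : \sum_(k < m.+1) 1 ^+ k * al k * be (m - k)%N = \sum_(k < m.+1) N k.
  by apply: eq_bigr => k _; rewrite expr1n mul1r.
have -> : \sum_(k < m.+1) 1 ^+ k * al k * ga (m - k)%N = \sum_(k < m.+1) Z k.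
  by apply: eq_bigr => k _; rewrite expr1n mul1r.
apply: (@cheb_sum _ m.+1 (fun k : nat => c ^+ k) N Z).
  by move=> x y hxy; apply: ler_weXn2l.
move=> x y hxy; rewrite /N /Z.
have h := efron_lemma C r0 (leq_sub2l m hxy).
have h' : al x * al y * (be (m - y)%N * ga (m - x)%N) <= al x * al y * (be (m - x)%N * ga (m - y)%N)
  := ler_wpM2l (mulr_ge0 (al0 x) (al0 y)) h.
move: h'; clear; move=> h'; nra.
Qed.

End Core4.

Section Core5.
Variable R : realFieldType.
Variable n : nat.
Local Notation I := 'I_n.

Lemma exists_min_set (S : {set I}) (f : I -> R) : S != finset.set0 ->
  exists i, i \in S /\ forall j, j \in S -> f i <= f j.
Proof.
case/set0Pn => i0 Hi0.
case: (@arg_minP _ R I i0 (fun j => j \in S) f Hi0) => i Si hi.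
by exists i; split.
Qed.

Lemma wt_scale (k : R) (l : I -> R) G : wtp (fun i => k * l i) G = k ^+ #|G| * wtp l G.
Proof. by rewrite /wtp big_split /= prodr_const. Qed.

Lemma esym_scale (k : R) (l : I -> R) m : esym_w (fun i => k * l i) m = k ^+ m * esym_w l m.
Proof.
rewrite /esym_w big_distrr /=; apply: eq_bigr => G /eqP hG.
by rewrite wt_scale hG.
Qed.

Lemma Tc_scale (k : R) (l : I -> R) C m : Tcnt (fun i => k * l i) C m = k ^+ m * Tcnt l C m.
Proof.
rewrite /Tcnt big_distrr /=; apply: eq_bigr => G /eqP hG.
by rewrite wt_scale hG mulrA.
Qed.

Lemma Tc_compl (l : I -> R) U m : Tcnt l U m + Tcnt l (~: U) m = m%:R * esym_w l m.
Proof.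
rewrite /Tcnt /esym_w -big_split big_distrr /=; apply: eq_bigr => G /eqP hG.
rewrite -mulrDr -natrD mulrC; congr (_%:R * _).
by rewrite -finset.setDE cardsID hG.
Qed.

Lemma esym_gt0 (l : I -> R) m : (forall i, 0 < l i) -> (m <= n)%N -> 0 < esym_w l m.
Proof.
move=> l0 hmn.
pose G0 := [set widen_ord hmn i | i : 'I_m].
have cG0 : #|G0| = m.
  rewrite card_imset ?card_ord //.
  by move=> x y /(congr1 val) /= /val_inj.
rewrite /esym_w (bigD1 G0) ?cG0 //=.
apply: ltr_pwDl; first by apply: prodr_gt0 => i _.
by apply: sumr_ge0 => G _; apply: prodr_ge0 => i _; apply: ltW.
Qed.

End Core5.

Section Core6.
Variable R : realFieldType.
Variables n m : nat.
Hypothesis hmn : (m <= n)%N.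
Local Notation I := 'I_n.

Definition Exq (l : I -> R) (U : {set I}) := Tcnt l U m / esym_w l m.

Lemma Ex_cross (l1 l2 : I -> R) U : (forall i, 0 < l1 i) -> (forall i, 0 < l2 i) ->
  Tcnt l1 U m * esym_w l2 m <= Tcnt l2 U m * esym_w l1 m -> Exq l1 U <= Exq l2 U.
Proof.
move=> h1 h2 h; rewrite /Exq ler_pdivrMr ?esym_gt0 // mulrAC ler_pdivlMr ?esym_gt0 //.
Qed.

Lemma Ex_ext (l1 l2 : I -> R) U : (forall i, l1 i = l2 i) -> Exq l1 U = Exq l2 U.
Proof. by move=> e; rewrite /Exq (Tc_ext _ _ e) (esym_ext _ e). Qed.

Lemma Ex_scale (k : R) (l : I -> R) U : 0 < k -> Exq (fun i => k * l i) U = Exq l U.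
Proof.
move=> k0; rewrite /Exq Tc_scale esym_scale invfM mulrACA divff ?mul1r //.
by rewrite expf_neq0 // gt_eqF.
Qed.

Lemma T_lemma (l : I -> R) (W U : {set I}) (c : R) : (forall i, 0 < l i) ->
  (W \subset U \/ U \subset W) -> 1 <= c -> Exq l U <= Exq (tiltw W c l) U.
Proof.
move=> l0 hWU c1.
have c0 : 0 < c by apply: lt_le_trans c1.
have lt0 : forall i, 0 < tiltw W c l i.
  by move=> i; rewrite /tiltw; case: ifP => _ //; apply: mulr_gt0.
have l0' : forall i, 0 <= l i by move=> i; apply: ltW.
case: hWU => hs.
- apply: Ex_cross => //.
  have hC : ~: U \subset ~: W by rewrite finset.setCS.
  have h := NC_tilt m l0' hC c1.
  have e1 := Tc_compl l U m; have e2 := Tc_compl (tiltw W c l) U m.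
  nra.
- pose mu i := if i \in W then l i else l i / c.
  have mu0 : forall i, 0 < mu i.
    by move=> i; rewrite /mu; case: ifP => _ //; apply: divr_gt0.
  have hC : U \subset ~: ~: W by rewrite finset.setCK.
  have h := NC_tilt m (fun i => ltW (mu0 i)) hC c1.
  have e1 : Exq l U = Exq (tiltw (~: W) c mu) U.
    apply: Ex_ext => i; rewrite /tiltw /mu inE; case: (i \in W) => //=.
    by rewrite mulrC divfK // gt_eqF.
  have e2 : Exq mu U = Exq (tiltw W c l) U.
    have ci : 0 < c^-1 by rewrite invr_gt0.
    rewrite -(@Ex_scale c^-1 (tiltw W c l) U ci); apply: Ex_ext => i.
    rewrite /mu /tiltw; case: ifP => _; first by rewrite mulrA mulVf ?mul1r // gt_eqF.
    by rewrite mulrC.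
  rewrite e1 -e2; apply: Ex_cross => //.
  by move=> i; rewrite /tiltw; case: ifP => _ //; apply: mulr_gt0.
Qed.

Definition upperset (r : I -> R) (U : {set I}) :=
  forall i j, i \in U -> r i <= r j -> j \in U.

Lemma upper_nested r W U : upperset r W -> upperset r U -> W \subset U \/ U \subset W.
Proof.
move=> hW hU; case hWU: (W \subset U); [by left|right].
case/fintype.subsetPn: (negbT hWU) => i iW iU.
apply/fintype.subsetP => j jU; case: (lerP (r i) (r j)) => h; first exact: hW i j iW h.
by move: iU; rewrite (hU j i jU (ltW h)).
Qed.

Lemma P2_tilt (r : I -> R) U : upperset r U -> forall k (nu : I -> R),
  (#|[set i | nu i != 1%R]| <= k)%N -> (forall i, 1 <= nu i) ->
  (forall i j, r i <= r j -> nu i <= nu j) ->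
  forall l : I -> R, (forall i, 0 < l i) -> Exq l U <= Exq (fun i => l i * nu i) U.
Proof.
move=> hU k; elim: k => [|k IH] nu hk nu1 num l l0.
  have e : forall i, nu i = 1.
    move=> i; apply/eqP; apply: contraT => hi.
    by move: hk; rewrite leqn0 => /eqP/cards0_eq/setP/(_ i); rewrite !inE hi.
  by rewrite (@Ex_ext (fun i => l i * nu i) l) // => i; rewrite e mulr1.
set S := [set i | nu i != 1%R] in hk.
have [S0|SN] := eqVneq S finset.set0.
  have e : forall i, nu i = 1.
    by move=> i; apply/eqP; apply: contraT => hi; move/setP: S0 => /(_ i); rewrite !inE hi.
  by rewrite (@Ex_ext (fun i => l i * nu i) l) // => i; rewrite e mulr1.
have [i0 [i0S i0m]] := exists_min_set nu SN.
set c := nu i0.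
have gt1 : forall i, i \in S -> 1 < nu i.
  by move=> i; rewrite inE => hi; rewrite lt_neqAle eq_sym hi nu1.
have c1 : 1 < c by apply: gt1.
have c0 : 0 < c by apply: lt_trans c1.
have upS : upperset r S.
  move=> i j iS hij; rewrite inE; apply: contraTneq isT => ej.
  by have := lt_le_trans (gt1 i iS) (num i j hij); rewrite ej ltxx.
pose nu' i := if i \in S then nu i / c else 1.
have nu'1 : forall i, 1 <= nu' i.
  by move=> i; rewrite /nu'; case: ifP => // iS; rewrite ler_pdivlMr // mul1r i0m.
have nu'm : forall i j, r i <= r j -> nu' i <= nu' j.
  move=> i j hij; rewrite /nu'; case: ifP => iS; last exact: nu'1.
  rewrite (upS i j iS hij); rewrite ler_pM2r ?invr_gt0 //; exact: num.
have hk' : (#|[set i | nu' i != 1%R]| <= k)%N.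
  have sub : [set i | nu' i != 1%R] \subset S :\ i0.
    apply/fintype.subsetP => i; rewrite !inE /nu'; case: ifP => iS; last by rewrite eqxx.
    move: iS; rewrite inE => ->; rewrite andbT; apply: contraTneq => ->; by rewrite negbK divff // gt_eqF.
  have := subset_leq_card sub; move: hk; rewrite (cardsD1 i0 S) i0S /=.
  by move=> h1 h2; apply: leq_trans h2 _; move: h1; rewrite add1n ltnS.
have lt0 : forall i, 0 < tiltw S c l i.
  by move=> i; rewrite /tiltw; case: ifP => _ //; apply: mulr_gt0.
apply: le_trans (T_lemma l0 (upper_nested upS hU) (ltW c1)) _.
rewrite (@Ex_ext (fun i => l i * nu i) (fun i => tiltw S c l i * nu' i)); last first.
  move=> i; rewrite /tiltw /nu'; case: ifP => iS.
    by rewrite [c * l i]mulrC -mulrA; congr (_ * _); rewrite mulrC divfK // gt_eqF.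
  have : nu i = 1 by apply/eqP; apply: contraFT iS; rewrite inE.
  by move=> ->.
exact: IH.
Qed.

Lemma layer_cake (r x y : I -> R) :
  (forall U, upperset r U -> \sum_(i in U) x i <= \sum_(i in U) y i) ->
  forall k (h : I -> R), (#|[set i | h i != 0%R]| <= k)%N -> (forall i, 0 <= h i) ->
  (forall i j, r i <= r j -> h i <= h j) ->
  \sum_i h i * x i <= \sum_i h i * y i.
Proof.
move=> hxy k; elim: k => [|k IH] h hk h0 hm.
  have e : forall i, h i = 0.
    move=> i; apply/eqP; apply: contraT => hi.
    by move: hk; rewrite leqn0 => /eqP/cards0_eq/setP/(_ i); rewrite !inE hi.
  by rewrite !big1 // => i _; rewrite e mul0r.
set S := [set i | h i != 0%R] in hk.
have [S0|SN] := eqVneq S finset.set0.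
  have e : forall i, h i = 0.
    by move=> i; apply/eqP; apply: contraT => hi; move/setP: S0 => /(_ i); rewrite !inE hi.
  by rewrite !big1 // => i _; rewrite e mul0r.
have [i0 [i0S i0m]] := exists_min_set h SN.
set c := h i0.
have gt0 : forall i, i \in S -> 0 < h i.
  by move=> i; rewrite inE => hi; rewrite lt_neqAle eq_sym hi h0.
have c0 : 0 < c by apply: gt0.
have upS : upperset r S.
  move=> i j iS hij; rewrite inE; apply: contraTneq isT => ej.
  by have := lt_le_trans (gt0 i iS) (hm i j hij); rewrite ej ltxx.
pose h' i := if i \in S then h i - c else 0.
have h'0 : forall i, 0 <= h' i.
  by move=> i; rewrite /h'; case: ifP => // iS; rewrite subr_ge0 i0m.
have h'm : forall i j, r i <= r j -> h' i <= h' j.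
  move=> i j hij; rewrite /h'; case: ifP => iS; last exact: h'0.
  rewrite (upS i j iS hij) lerD2r; exact: hm.
have hk' : (#|[set i | h' i != 0%R]| <= k)%N.
  have sub : [set i | h' i != 0%R] \subset S :\ i0.
    apply/fintype.subsetP => i; rewrite !inE /h'; case: ifP => iS; last by rewrite eqxx.
    move: iS; rewrite inE => ->; rewrite andbT; apply: contraTneq => ->; by rewrite negbK subrr.
  have := subset_leq_card sub; move: hk; rewrite (cardsD1 i0 S) i0S /=.
  by move=> h1 h2; apply: leq_trans h2 _; move: h1; rewrite add1n ltnS.
have split : forall z : I -> R, \sum_i h i * z i = c * \sum_(i in S) z i + \sum_i h' i * z i.
  move=> z; rewrite big_distrr /= [in RHS]big_mkcond /= -big_split /=.
  apply: eq_bigr => i _; rewrite /h'; case: ifP => iS.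
    by ring.
  have : h i = 0 by apply/eqP; apply: contraFT iS; rewrite inE.
  by move=> ->; rewrite !mul0r add0r.
rewrite !split; apply: lerD; first by apply: ler_wpM2l; [apply: ltW|apply: hxy].
exact: IH.
Qed.

Definition pi_w (l : I -> R) (i : I) :=
  \sum_(G : {set I} | (#|G| == m) && (i \in G)) wtp l G / esym_w l m.

Lemma sum_pi (l : I -> R) (U : {set I}) : \sum_(i in U) pi_w l i = Exq l U.
Proof.
rewrite /pi_w /Exq /Tcnt mulr_suml.
rewrite (exchange_big_dep (fun G : {set I} => #|G| == m)) /=; last by move=> i G _ /andP [].
apply: eq_bigr => G /eqP hG.
rewrite (eq_bigl (fun i => i \in G :&: U)); last first.
  by move=> i; rewrite inE hG eqxx /= andbC.
by rewrite sumr_const mulrAC mulr_natr.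
Qed.

Lemma pi_ext (l1 l2 : I -> R) i : (forall j, l1 j = l2 j) -> pi_w l1 i = pi_w l2 i.
Proof.
move=> e; rewrite /pi_w (esym_ext _ e); apply: eq_bigr => G _; by rewrite (wt_ext _ e).
Qed.

Lemma P_main (r q l nu : I -> R) : (forall i, 0 < l i) -> (forall i, 1 <= nu i) ->
  (forall i j, r i <= r j -> nu i <= nu j) -> (forall i, 0 <= q i) ->
  (forall i j, r i <= r j -> q i <= q j) ->
  \sum_i q i * pi_w l i <= \sum_i q i * pi_w (fun i => l i * nu i) i.
Proof.
move=> l0 nu1 num q0 qm.
apply: (@layer_cake r (pi_w l) (pi_w (fun i => l i * nu i)) _ _ q (leqnn _) q0 qm).
move=> U hU; rewrite !sum_pi; exact: (P2_tilt hU (leqnn _) nu1 num l0).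
Qed.

End Core6.

Local Open Scope classical_set_scope.

Section G.
Variables (R : realType) (d : measure_display) (X : measurableType d).
Variable F : probability (X * bool * bool)%type R.
Variable r : X -> R.
Hypothesis hr : measurable_fun setT r.

Lemma mesY (y : bool) : measurable [set t : X * bool * bool | t.2 = y].
Proof.
have := @measurable_snd _ _ (X * bool)%type bool measurableT [set y] I.
by rewrite setTI.
Qed.

Lemma mesRY rho (y : bool) : measurable [set t : X * bool * bool | r t.1.1 = rho /\ t.2 = y].
Proof.
have h1 : measurable_fun setT (fun t : X * bool * bool => r t.1.1).
  apply: measurableT_comp => //; apply: measurableT_comp => //.
have := h1 measurableT [set rho] (measurable_set1 rho).
rewrite setTI => h2.
have -> : [set t : X * bool * bool | r t.1.1 = rho /\ t.2 = y] =
   ((fun t : X * bool * bool => r t.1.1) @^-1` [set rho]) `&` [set t | t.2 = y].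
  by apply/seteqP; split => t /=.
exact: measurableI h2 (mesY y).
Qed.

Lemma probRY_ge0 rho y : 0 <= probRY F r rho y.
Proof. by apply: fine_ge0; apply: measure_ge0. Qed.

Lemma probY_ge0 y : 0 <= probY F y.
Proof. by apply: fine_ge0; apply: measure_ge0. Qed.

Lemma probRY_le rho y : probRY F r rho y <= probY F y.
Proof.
apply: fine_le.
- by apply: fin_num_measure; apply: mesRY.
- by apply: fin_num_measure; apply: mesY.
- apply: le_measure; rewrite ?inE; [exact: mesRY|exact: mesY|].
  by move=> t [].
Qed.

Lemma star_mlr (Rs : seq R) : MLR F r Rs -> forall rho rho', rho \in Rs -> rho' \in Rs -> rho' < rho ->
  probRY F r rho' true * probRY F r rho false <= probRY F r rho true * probRY F r rho' false.
Proof.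
move=> hmlr rho rho' h1 h2 h3; have := hmlr rho rho' h1 h2 h3; rewrite /condprobR.
have z1 : forall rh y, probY F y = 0 -> probRY F r rh y = 0.
  move=> rh y e; apply/le_anti; rewrite probRY_ge0 andbT -e; exact: probRY_le.
case: (eqVneq (probY F true) 0) => e1.
  by rewrite !(z1 _ true) // !mul0r.
case: (eqVneq (probY F false) 0) => e0.
  by rewrite !(z1 _ false) // !mulr0.
have p1 : 0 < probY F true by rewrite lt_neqAle eq_sym e1 probY_ge0.
have p0 : 0 < probY F false by rewrite lt_neqAle eq_sym e0 probY_ge0.
rewrite !mulf_div ler_pM2r // invr_gt0; exact: mulr_gt0.
Qed.

End G.

Section G2.
Variable R : realType.

Lemma sel_pi_eq n m (eps : R) (rs : 'I_n -> R) i :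
  select_prob m eps rs i = pi_w m (fun j => expR (eps * rs j / 2)) i.
Proof.
have e : forall G : {set 'I_n}, expR (eps * (\sum_(j in G) rs j) / 2) =
    wtp (fun j => expR (eps * rs j / 2)) G.
  by move=> G; rewrite /wtp -expR_sum mulr_sumr mulr_suml.
rewrite /select_prob /pi_w /expmech_weight /esym_w; apply: eq_bigr => G _.
rewrite e; congr (_ / _); apply: eq_bigr => G' _; exact: e.
Qed.

Lemma zsplit_ffun (A B : finType) n (Xf : {ffun 'I_n -> A * B} -> R) :
  \sum_(z : {ffun 'I_n -> A * B}) Xf z =
  \sum_(rho : {ffun 'I_n -> A}) \sum_(y : {ffun 'I_n -> B}) Xf [ffun j => (rho j, y j)].
Proof.
rewrite pair_big /=.
pose h (p : {ffun 'I_n -> A} * {ffun 'I_n -> B}) : {ffun 'I_n -> A * B} :=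
  [ffun j => (p.1 j, p.2 j)].
pose g (z : {ffun 'I_n -> A * B}) := ([ffun j => (z j).1], [ffun j => (z j).2]).
have hb : bijective h.
  exists g.
    move=> [a b]; rewrite /g /h /=; congr (_, _); apply/ffunP => j; by rewrite !ffunE.
  move=> z; rewrite /g /h /=; apply/ffunP => j; rewrite !ffunE; by case: (z j).
by rewrite (reindex h) //; apply: onW_bij.
Qed.

Lemma yprod_sum n (pf : 'I_n -> bool -> R) i :
  \sum_(y : {ffun 'I_n -> bool}) (\prod_j pf j (y j)) * (y i)%:R =
  pf i true * \prod_(j | j != i) (pf j true + pf j false).
Proof.
transitivity (\sum_(y : {ffun 'I_n -> bool}) \prod_j (pf j (y j) * (if j == i then (y j)%:R else 1))).
  apply: eq_bigr => y _; rewrite big_split /=; congr (_ * _).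
  by rewrite (bigD1 i) //= eqxx big1 ?mulr1 // => j /negPf ->.
rewrite -(bigA_distr_bigA (fun j b => pf j b * (if j == i then b%:R else 1))) /=.
rewrite (bigD1 i) //= big_bool /= eqxx mulr1 mulr0 addr0; congr (_ * _).
by apply: eq_bigr => j /negPf ->; rewrite big_bool /= !mulr1.
Qed.

End G2.

Section G3.
Variables (R : realType) (d : measure_display) (X : measurableType d).
Variable F : probability (X * bool * bool)%type R.
Variable r : X -> R.
Hypothesis hr : measurable_fun setT r.
Variable Rs : seq R.
Hypothesis hmlr : MLR F r Rs.

Lemma qmono_lemma n (s : 'I_n -> R) : (forall j, s j \in Rs) -> forall i k, s i <= s k ->
  probRY F r (s i) true * \prod_(j | j != i) (probRY F r (s j) true + probRY F r (s j) false) <=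
  probRY F r (s k) true * \prod_(j | j != k) (probRY F r (s j) true + probRY F r (s j) false).
Proof.
move=> hs i k hik.
have [->|nik] := eqVneq i k; first by [].
set S := fun j => probRY F r (s j) true + probRY F r (s j) false.
rewrite (bigD1 k) 1?eq_sym //= [X in _ <= _ * X](bigD1 i) //=.
rewrite (eq_bigl (fun j => (j != k) && (j != i))); last by move=> j; rewrite andbC.
set P := \prod_(j | (j != k) && (j != i)) S j.
have P0 : 0 <= P.
  by apply: prodr_ge0 => j _; apply: addr_ge0; apply: probRY_ge0.
case: (lerP (s k) (s i)) => h.
  have e : s i = s k by apply/le_anti; rewrite hik h.
  by rewrite /S e.
have := ler_wpM2r P0 (star_mlr hr hmlr (hs k) (hs i) h).
rewrite /S; nra.
Qed.

Theorem main_glue_thm :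
  (forall rho, rho \in Rs -> 0 <= rho <= 1) ->
  (forall x, r x \in Rs) ->
  forall n m : nat, (1 <= m <= n)%N ->
  forall eps1 eps2 : R, 0 <= eps1 -> eps1 <= eps2 ->
    accuracy F r Rs n m eps1 <= accuracy F r Rs n m eps2.
Proof.
move=> h01 hrs n m /andP [m1 hmn] e1 e2 he1 he12.
rewrite /accuracy; apply: ler_wpM2l; first by rewrite invr_ge0 ler0n.
rewrite exchange_big [X in _ <= X]exchange_big /= !zsplit_ffun.
apply: ler_sum => rho _.
set s := fun j => val (rho j).
have hs : forall j, s j \in Rs by move=> j; exact: (valP (rho j)).
set q := fun i => probRY F r (s i) true *
   \prod_(j | j != i) (probRY F r (s j) true + probRY F r (s j) false).
have key : forall eps,
  \sum_(y : {ffun 'I_n -> bool}) \sum_(i < n)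
     (\prod_(j < n) probRY F r (val ([ffun j => (rho j, y j)] j).1) ([ffun j => (rho j, y j)] j).2) *
     select_prob m eps (fun j => val ([ffun j => (rho j, y j)] j).1) i *
     (([ffun j => (rho j, y j)] i).2)%:R
  = \sum_(i < n) q i * pi_w m (fun j => expR (eps * s j / 2)) i.
  move=> eps.
  transitivity (\sum_(y : {ffun 'I_n -> bool}) \sum_(i < n)
     select_prob m eps s i * ((\prod_(j < n) probRY F r (s j) (y j)) * (y i)%:R)).
    apply: eq_bigr => y _; apply: eq_bigr => i _.
    rewrite ffunE /=.
    have -> : (fun j => val ([ffun j => (rho j, y j)] j).1) = s.
      by apply/funext => j; rewrite ffunE.
    rewrite (eq_bigr (fun j => probRY F r (s j) (y j))); last by move=> j _; rewrite ffunE.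
    by rewrite mulrCA mulrA.
  rewrite exchange_big /=; apply: eq_bigr => i _.
  rewrite -big_distrr /= (yprod_sum (fun j b => probRY F r (s j) b)) sel_pi_eq mulrC.
  done.
rewrite !key.
have s0 : forall j, 0 <= s j by move=> j; have /andP [] := h01 _ (hs j).
have de : 0 <= e2 - e1 by rewrite subr_ge0.
rewrite [X in _ <= X](eq_bigr (fun i => q i *
   pi_w m (fun j => expR (e1 * s j / 2) * expR ((e2 - e1) * s j / 2)) i)); last first.
  move=> i _; congr (_ * _); apply: pi_ext => j; rewrite -expRD; congr expR; ring.
apply: (P_main (r := s) hmn).
- by move=> i; apply: expR_gt0.
- move=> i; apply: le_trans (expR_ge1Dx _); rewrite lerDl.
  by apply: divr_ge0; [apply: mulr_ge0|].
- move=> i j h; rewrite ler_expR.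
  apply: ler_wpM2r => //; exact: (ler_wpM2l de h).
- move=> i; apply: mulr_ge0; first exact: probRY_ge0.
  by apply: prodr_ge0 => j _; apply: addr_ge0; apply: probRY_ge0.
- by move=> i k h; apply: (qmono_lemma hs h).
Qed.

End G3.

Theorem mainTheorem8 (R : realType) (d : measure_display) (X : measurableType d)
  (F : probability (X * bool * bool)%type R) (Rs : seq R) (r : X -> R) :
  (forall rho, rho \in Rs -> 0 <= rho <= 1) ->
  (forall x, r x \in Rs) ->
  measurable_fun setT r ->
  MLR F r Rs ->
  forall n m : nat, (1 <= m <= n)%N ->
  forall eps1 eps2 : R, 0 <= eps1 -> eps1 <= eps2 ->
    accuracy F r Rs n m eps1 <= accuracy F r Rs n m eps2.
Proof.
move=> h01 hrs hr hmlr; exact: (main_glue_thm hr hmlr h01 hrs).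
Qed.
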